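(* Let $U$ be a commutative supertropical semiring, $M:=eU$, and $\gamma:M\to N$ a surjective homomorphism onto a bipotent semiring $N$. Let $H=H(U,\gamma)$ be the relation on $U$ given by: $x_1\sim_H x_2$ iff $\gamma(ex_1)=\gamma(ex_2)$ and either $x_1=x_2$, or $x_1,x_2\in M\cup\Sigma_0(U,\gamma)$, or $\gamma(ex_1)=0$. Then $\pi_H:U\to U/H$ is the initial semiring homomorphism covering $\gamma$: $U/H$ (with the supertropical monoid structure making $\pi_H$ a transmission, its ghost ideal identified with $N$) is a supertropical semiring, $\pi_H$ is a semiring homomorphism covering $\gamma$, and for every supertropical semiring $W$ with $eW=N$ and every semiring homomorphism $\beta:U\to W$ covering $\gamma$ there is a unique semiring homomorphism $\eta:U/H\to W$ covering $\mathrm{id}_N$ with $\beta=\eta\circ\pi_H$.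
   Context: A supertropical monoid is a commutative monoid $(U,\cdot)$ with absorbing element $0$ and distinguished idempotent $e$ with $ex=0\Rightarrow x=0$, together with a total ordering on $M:=eU$, compatible with multiplication and with $0$ least, making $M$ a bipotent semiring (addition $=\max$). A supertropical semiring is a supertropical monoid for which the addition $x+y:=y$ if $ex<ey$, $x$ if $ex>ey$, $ex$ if $ex=ey$ is associative and distributive. $\mathcal T(U):=U\setminus eU$. A map $\alpha:U\to V$ covers $\gamma$ if it maps $eU$ to $eV$ and restricts there to $\gamma$. $\Sigma_0(U,\gamma):=\{x\in\mathcal T(U):\exists x_1\in M,\ x_1<ex,\ \gamma(x_1)=\gamma(ex)\neq0\}$. For a TE-relation $E$ (multiplicative equivalence relation, order compatible on $M$, with $ex\sim_E0\Rightarrow x\sim_E0$), $U/E$ carries the unique supertropical monoid structure making $\pi_E$ a transmission (a multiplicative map preserving $0,1,e$ and the order on ghosts). *)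

(* Defs.v *)
From HB Require Import structures.
From mathcomp Require Import all_boot all_algebra.
From Stdlib Require Import ClassicalEpsilon.
Set Implicit Arguments. Unset Strict Implicit. Unset Printing Implicit Defensive.
Import GRing.Theory.
Local Open Scope ring_scope.

(* Raw data of a (would-be) supertropical monoid: carrier, multiplication,
   1, absorbing 0, distinguished idempotent e, and an order relation which is
   only required to be a total order on the ghost ideal M = eU. *)
Record STops := STOps {
  st_car :> Type;
  st_mul : st_car -> st_car -> st_car;
  st_one : st_car;
  st_zero : st_car;
  st_e : st_car;
  st_le : st_car -> st_car -> Prop }.

Section SupertropicalDefs.
Variable S : STops.

(* x lies in M = eU  (equivalently e x = x, since e is idempotent) *)
Definition ghost (x : S) : Prop := st_mul (st_e S) x = x.

Definition st_lt (x y : S) : Prop := st_le x y /\ x <> y.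

Definition st_add (x y : S) : S :=
  let ex := st_mul (st_e S) x in
  let ey := st_mul (st_e S) y in
  if excluded_middle_informative (st_lt ex ey) then y
  else if excluded_middle_informative (st_lt ey ex) then x
  else ex.

Record is_st_monoid : Prop := {
  stm_mulA : forall x y z : S, st_mul x (st_mul y z) = st_mul (st_mul x y) z;
  stm_mulC : forall x y : S, st_mul x y = st_mul y x;
  stm_mul1 : forall x : S, st_mul (st_one S) x = x;
  stm_mul0 : forall x : S, st_mul (st_zero S) x = st_zero S;
  stm_ee : st_mul (st_e S) (st_e S) = st_e S;
  stm_e0 : forall x : S, st_mul (st_e S) x = st_zero S -> x = st_zero S;
  stm_le_refl : forall x : S, ghost x -> st_le x x;
  stm_le_anti : forall x y : S, ghost x -> ghost y -> st_le x y -> st_le y x -> x = y;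
  stm_le_trans : forall x y z : S, ghost x -> ghost y -> ghost z ->
      st_le x y -> st_le y z -> st_le x z;
  stm_le_total : forall x y : S, ghost x -> ghost y -> st_le x y \/ st_le y x;
  stm_le_mul : forall x y z : S, ghost x -> ghost y -> ghost z ->
      st_le x y -> st_le (st_mul x z) (st_mul y z);
  stm_le0 : forall x : S, ghost x -> st_le (st_zero S) x }.

Definition is_st_semiring : Prop :=
  [/\ is_st_monoid,
      (forall x y z : S, st_add x (st_add y z) = st_add (st_add x y) z) &
      (forall x y z : S, st_mul x (st_add y z) = st_add (st_mul x y) (st_mul x z))].

End SupertropicalDefs.

Definition st_semiring_hom (S T : STops) (f : S -> T) : Prop :=
  [/\ f (st_zero S) = st_zero T, f (st_one S) = st_one T,
      (forall x y, f (st_mul x y) = st_mul (f x) (f y)) &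
      (forall x y, f (st_add x y) = st_add (f x) (f y))].

Definition bipotent (N : comPzSemiRingType) : Prop :=
  forall a b : N, a + b = a \/ a + b = b.

(* gam : M -> N (given as a function on U, only used on M = eU) is a semiring
   homomorphism of M = eU (unit e, addition = max) into N *)
Definition ghost_hom (U : STops) (N : comPzSemiRingType) (gam : U -> N) : Prop :=
  [/\ gam (st_zero U) = 0, gam (st_e U) = 1 &
      forall x y : U, ghost x -> ghost y ->
        gam (st_mul x y) = gam x * gam y /\ gam (st_add x y) = gam x + gam y].

Definition ghost_surj (U : STops) (N : comPzSemiRingType) (gam : U -> N) : Prop :=
  forall n : N, exists x : U, ghost x /\ gam x = n.

Definition ghost_ident (N : comPzSemiRingType) (S : STops) (i : N -> S) : Prop :=
  [/\ (forall n, ghost (i n)),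
      (forall y : S, ghost y -> exists n, i n = y),
      injective i,
      i 0 = st_zero S /\ i 1 = st_e S &
      forall a b, i (a * b) = st_mul (i a) (i b) /\ i (a + b) = st_add (i a) (i b)].

Definition covers (U S : STops) (N : comPzSemiRingType) (gam : U -> N)
  (i : N -> S) (f : U -> S) : Prop :=
  forall x : U, ghost x -> f x = i (gam x).

Section HRelation.
Variables (U : STops) (N : comPzSemiRingType) (gam : U -> N).
Local Notation eU x := (st_mul (st_e U) x).

Definition Sigma0 (x : U) : Prop :=
  ~ ghost x /\
  exists x1 : U, [/\ ghost x1, st_lt x1 (eU x), gam x1 = gam (eU x) & gam (eU x) <> 0].

Definition Hrel (x1 x2 : U) : Prop :=
  gam (eU x1) = gam (eU x2) /\
  (x1 = x2 \/ ((ghost x1 \/ Sigma0 x1) /\ (ghost x2 \/ Sigma0 x2)) \/ gam (eU x1) = 0).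

Definition Hq : Type := {P : U -> Prop | exists x, P = Hrel x}.

Definition piH (x : U) : Hq := exist _ (Hrel x) (ex_intro _ x erefl).

Definition repH (q : Hq) : U :=
  proj1_sig (constructive_indefinite_description _ (proj2_sig q)).

(* the (unique) supertropical monoid structure on U/H making pi_H a
   transmission: [x][y] = [xy], 1 = [1], 0 = [0], e = [e], and the order on
   ghost classes is the order of N via gam. *)
Definition quotH : STops :=
  @STOps Hq (fun a b => piH (st_mul (repH a) (repH b)))
    (piH (st_one U)) (piH (st_zero U)) (piH (st_e U))
    (fun a b => gam (eU (repH a)) + gam (eU (repH b)) = gam (eU (repH b))).

Definition iotaH (n : N) : quotH :=
  piH (epsilon (inhabits (st_zero U)) (fun x => ghost x /\ gam x = n)).

End HRelation.

(* Main.v *)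
Require Import Defs.
From mathcomp Require Import all_boot all_algebra.
From Stdlib Require Import ClassicalEpsilon ProofIrrelevance FunctionalExtensionality PropExtensionality.
Set Implicit Arguments. Unset Strict Implicit. Unset Printing Implicit Defensive.
Import GRing.Theory.
Local Open Scope ring_scope.


Lemma ghost_e (U : STops) (HM : is_st_monoid U) x : ghost (st_mul (st_e U) x).
Proof. by rewrite /ghost (stm_mulA HM) (stm_ee HM). Qed.

Lemma e_mul (U : STops) (HM : is_st_monoid U) x z :
  st_mul (st_e U) (st_mul x z) = st_mul (st_mul (st_e U) x) (st_mul (st_e U) z).
Proof.
have h : st_mul x (st_mul (st_e U) z) = st_mul (st_e U) (st_mul x z).
  by rewrite (stm_mulA HM) [st_mul x (st_e U)](stm_mulC HM) -(stm_mulA HM).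
by rewrite -[RHS](stm_mulA HM) h [RHS](stm_mulA HM) (stm_ee HM).
Qed.

Lemma ghost_mul (U : STops) (HM : is_st_monoid U) (x z : U) : ghost x -> ghost (st_mul x z).
Proof. by rewrite /ghost (stm_mulA HM) => ->. Qed.

Lemma ghost_add (U : STops) (HM : is_st_monoid U) (x y : U) : ghost x -> ghost y -> ghost (st_add x y).
Proof.
rewrite /st_add => gx gy.
destruct excluded_middle_informative; simpl => //.
destruct excluded_middle_informative; simpl => //.
exact: ghost_e.
Qed.

Lemma add_eq (U : STops) (x y : U) :
  st_mul (st_e U) x = st_mul (st_e U) y -> st_add x y = st_mul (st_e U) x.
Proof.
move=> E; rewrite /st_add /= -E.
by destruct excluded_middle_informative as [HH|H1]; simpl => //; case: HH.
Qed.

Lemma add_ee (U : STops) (HM : is_st_monoid U) x :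
  st_add x (st_mul (st_e U) x) = st_mul (st_e U) x.
Proof. by rewrite add_eq // (stm_mulA HM) (stm_ee HM). Qed.

Lemma add_lt (U : STops) (HM : is_st_monoid U) x y :
  st_lt (st_mul (st_e U) y) (st_mul (st_e U) x) -> st_add x y = x.
Proof.
move=> [le ne]; rewrite /st_add /=.
destruct excluded_middle_informative as [HH|HH0]; simpl.
  by case: HH => le' _; case: ne; apply: (stm_le_anti HM) => //; apply: ghost_e.
by destruct excluded_middle_informative as [HH1|HH]; simpl => //; case: HH.
Qed.

Lemma add_lt' (U : STops) x y :
  st_lt (st_mul (st_e U) x) (st_mul (st_e U) y) -> st_add x y = y.
Proof.
move=> H; rewrite /st_add /=.
by destruct excluded_middle_informative as [HH1|HH]; simpl => //; case: HH.
Qed.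

Lemma gam_le (U : STops) (N : comPzSemiRingType) (gam : U -> N) (HM : is_st_monoid U)
  (Hg : ghost_hom gam) u v : ghost u -> ghost v -> st_le u v -> gam u + gam v = gam v.
Proof.
move=> gu gv le; case: Hg => _ _ /(_ u v gu gv) [_ <-]; congr gam.
have [->|ne] := classic (u = v).
  by rewrite add_eq // gv.
by apply: add_lt'; rewrite gu gv.
Qed.



Lemma Hrefl (U : STops) (N : comPzSemiRingType) (gam : U -> N) x : Hrel gam x x.
Proof. by split => //; left. Qed.

Lemma Hsym (U : STops) (N : comPzSemiRingType) (gam : U -> N) x y : Hrel gam x y -> Hrel gam y x.
Proof.
move=> [E [->|[[h1 h2]|h0]]]; split => //; [by left | right; left; tauto | by right; right; rewrite -E].
Qed.

Lemma Htrans (U : STops) (N : comPzSemiRingType) (gam : U -> N) x y z :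
  Hrel gam x y -> Hrel gam y z -> Hrel gam x z.
Proof.
move=> [E1 D1] [E2 D2]; split; first by rewrite E1.
case: D1 => [->|[[a1 b1]|h0]]; first by [].
  case: D2 => [<-|[[a2 b2]|h0]]; first by right; left.
    by right; left.
  by right; right; rewrite E1.
by right; right.
Qed.

Lemma piH_eq (U : STops) (N : comPzSemiRingType) (gam : U -> N) x y :
  piH gam x = piH gam y <-> Hrel gam x y.
Proof.
split.
  move=> /(congr1 (@proj1_sig _ _)) /= E.
  by move: (Hrefl gam y); rewrite -E.
move=> H; apply: subset_eq_compat.
apply: functional_extensionality => z; apply: propositional_extensionality.
split => h; [exact: Htrans (Hsym H) h | exact: Htrans H h].
Qed.

Lemma piH_surj (U : STops) (N : comPzSemiRingType) (gam : U -> N) (q : Hq gam) :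
  q = piH gam (repH q).
Proof.
case: q => P p; rewrite /piH /repH /=; apply: subset_eq_compat.
exact: proj2_sig (constructive_indefinite_description _ p).
Qed.

Lemma rep_piH (U : STops) (N : comPzSemiRingType) (gam : U -> N) x :
  Hrel gam (repH (piH gam x)) x.
Proof. by apply/piH_eq; rewrite -piH_surj. Qed.

Lemma Hghost (U : STops) (N : comPzSemiRingType) (gam : U -> N) x y :
  ghost x -> ghost y -> gam x = gam y -> Hrel gam x y.
Proof. by move=> gx gy E; rewrite /Hrel gx gy; split => //; right; left; tauto. Qed.


Lemma gam_emul (U : STops) (N : comPzSemiRingType) (gam : U -> N) (HM : is_st_monoid U)
  (Hg : ghost_hom gam) (x z : U) :
  gam (st_mul (st_e U) (st_mul x z)) = gam (st_mul (st_e U) x) * gam (st_mul (st_e U) z).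
Proof.
rewrite (e_mul HM); case: Hg => _ _ /(_ _ _ (ghost_e HM x) (ghost_e HM z)) [-> _] //.
Qed.

Lemma Sigma0_mul (U : STops) (N : comPzSemiRingType) (gam : U -> N) (HU : is_st_semiring U)
  (Hg : ghost_hom gam) (x z : U) :
  Sigma0 gam x -> ghost (st_mul x z) \/ Sigma0 gam (st_mul x z) \/
                  gam (st_mul (st_e U) (st_mul x z)) = 0.
Proof.
case: (HU) => HM HA HD.
move=> [ngx [x1 [gx1 [le1 ne1] E1 nz]]].
set w := st_mul x1 z.
have gw : ghost w by apply: ghost_mul.
have hw : w = st_mul x1 (st_mul (st_e U) z).
  by rewrite (stm_mulA HM) [st_mul x1 _](stm_mulC HM) gx1.
have lew : st_le w (st_mul (st_e U) (st_mul x z)).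
  rewrite hw (e_mul HM); apply: (stm_le_mul HM) => //; exact: ghost_e.
have gamw : gam w = gam (st_mul (st_e U) (st_mul x z)).
  rewrite (gam_emul HM Hg) hw -E1.
  by case: Hg => _ _ /(_ _ _ gx1 (ghost_e HM z)) [-> _].
have [eqw|new] := classic (w = st_mul (st_e U) (st_mul x z)).
  left.
  have hx : st_add x x1 = x by apply: (add_lt HM); rewrite gx1.
  have : st_mul z (st_add x x1) = st_add (st_mul z x) (st_mul z x1) by apply: HD.
  rewrite hx [st_mul z x](stm_mulC HM) [st_mul z x1](stm_mulC HM) -/w.
  rewrite add_eq; first by move=> ->; apply: ghost_e.
  by rewrite -eqw gw.
have [gxz|ngxz] := classic (ghost (st_mul x z)); first by left.
have [z0|nz0] := classic (gam (st_mul (st_e U) (st_mul x z)) = 0); first by right; right.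
by right; left; split => //; exists w; split.
Qed.

Lemma Hrel_mulr (U : STops) (N : comPzSemiRingType) (gam : U -> N) (HU : is_st_semiring U)
  (Hg : ghost_hom gam) (x y z : U) : Hrel gam x y -> Hrel gam (st_mul x z) (st_mul y z).
Proof.
case: (HU) => HM HA HD.
have hz (u : U) : ghost u \/ Sigma0 gam u -> ghost (st_mul u z) \/ Sigma0 gam (st_mul u z) \/
                  gam (st_mul (st_e U) (st_mul u z)) = 0.
  case=> [g|s]; first by left; apply: ghost_mul.
  exact: Sigma0_mul.
move=> [E D]; split; first by rewrite !(gam_emul HM Hg) E.
case: D => [->|[[a b]|h0]]; first by left.
  have Ez : gam (st_mul (st_e U) (st_mul x z)) = gam (st_mul (st_e U) (st_mul y z)).
    by rewrite !(gam_emul HM Hg) E.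
  case: (hz _ a) => [a'|[a'|a0]]; last by right; right.
    case: (hz _ b) => [b'|[b'|b0]]; [by right; left; tauto | by right; left; tauto | by right; right; rewrite Ez].
  case: (hz _ b) => [b'|[b'|b0]]; [by right; left; tauto | by right; left; tauto | by right; right; rewrite Ez].
by right; right; rewrite (gam_emul HM Hg) h0 mul0r.
Qed.

Lemma piH_mul (U : STops) (N : comPzSemiRingType) (gam : U -> N) (HU : is_st_semiring U)
  (Hg : ghost_hom gam) (x y : U) :
  st_mul (piH gam x : quotH gam) (piH gam y) = piH gam (st_mul x y).
Proof.
case: (HU) => HM HA HD.
rewrite /=; apply/piH_eq.
apply: Htrans (Hrel_mulr HU Hg _ (rep_piH gam x)) _.
rewrite (stm_mulC HM) [st_mul x y](stm_mulC HM).
by apply: Hrel_mulr => //; exact: rep_piH.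
Qed.


Lemma add_lt2 (S : STops) (x y : S) :
  ~ st_lt (st_mul (st_e S) x) (st_mul (st_e S) y) ->
  st_lt (st_mul (st_e S) y) (st_mul (st_e S) x) -> st_add x y = x.
Proof.
move=> n l; rewrite /st_add /=.
destruct excluded_middle_informative as [HH|HH0]; simpl => //.
by destruct excluded_middle_informative as [HH1|HH]; simpl => //.
Qed.

Lemma add_neither (S : STops) (x y : S) :
  ~ st_lt (st_mul (st_e S) x) (st_mul (st_e S) y) ->
  ~ st_lt (st_mul (st_e S) y) (st_mul (st_e S) x) -> st_add x y = st_mul (st_e S) x.
Proof.
move=> n l; rewrite /st_add /=.
destruct excluded_middle_informative as [HH|HH0]; simpl => //.
by destruct excluded_middle_informative as [HH1|HH]; simpl => //.
Qed.

Lemma g_piH (U : STops) (N : comPzSemiRingType) (gam : U -> N) x :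
  gam (st_mul (st_e U) (repH (piH gam x))) = gam (st_mul (st_e U) x).
Proof. by case: (rep_piH gam x). Qed.

Lemma e_q (U : STops) (N : comPzSemiRingType) (gam : U -> N) (HU : is_st_semiring U)
  (Hg : ghost_hom gam) x :
  st_mul (st_e (quotH gam)) (piH gam x) = piH gam (st_mul (st_e U) x).
Proof. exact: piH_mul. Qed.

Lemma piH_ghost_eq (U : STops) (N : comPzSemiRingType) (gam : U -> N) (HM : is_st_monoid U) x y :
  piH gam (st_mul (st_e U) x) = piH gam (st_mul (st_e U) y) <->
  gam (st_mul (st_e U) x) = gam (st_mul (st_e U) y).
Proof.
split; first by move/piH_eq => [];  rewrite (ghost_e HM x) (ghost_e HM y).
by move=> E; apply/piH_eq; apply: Hghost => //; apply: ghost_e.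
Qed.

Lemma quot_lt (U : STops) (N : comPzSemiRingType) (gam : U -> N) (HM : is_st_monoid U) x y :
  st_lt (piH gam (st_mul (st_e U) x) : quotH gam) (piH gam (st_mul (st_e U) y)) <->
  gam (st_mul (st_e U) x) + gam (st_mul (st_e U) y) = gam (st_mul (st_e U) y) /\
  gam (st_mul (st_e U) x) <> gam (st_mul (st_e U) y).
Proof.
rewrite /st_lt /= !g_piH (ghost_e HM x) (ghost_e HM y).
split => [[a b]|[a b]]; split => //.
  by move=> E; apply: b; apply/piH_ghost_eq.
by move=> /(piH_ghost_eq _ HM).
Qed.

Lemma HSig (U : STops) (N : comPzSemiRingType) (gam : U -> N) (HM : is_st_monoid U) u y :
  ghost u -> st_lt u (st_mul (st_e U) y) -> gam u = gam (st_mul (st_e U) y) -> Hrel gam y u.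
Proof.
move=> gu lt E; split; first by rewrite gu E.
have [z|nz] := classic (gam (st_mul (st_e U) y) = 0); first by right; right.
right; left; split; last by left.
have [g|ng] := classic (ghost y); first by left.
by right; split => //; exists u; split.
Qed.

Lemma U_lt (U : STops) (N : comPzSemiRingType) (gam : U -> N) (HM : is_st_monoid U)
  (Hg : ghost_hom gam) x y :
  gam (st_mul (st_e U) x) + gam (st_mul (st_e U) y) = gam (st_mul (st_e U) y) ->
  gam (st_mul (st_e U) x) <> gam (st_mul (st_e U) y) ->
  st_lt (st_mul (st_e U) x) (st_mul (st_e U) y).
Proof.
move=> le ne.
have ne' : st_mul (st_e U) x <> st_mul (st_e U) y by move=> E; apply: ne; rewrite E.
case: (stm_le_total HM (ghost_e HM x) (ghost_e HM y)) => h; first by split.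
move: (gam_le HM Hg (ghost_e HM y) (ghost_e HM x) h); rewrite addrC le => E.
by case: ne.
Qed.

Lemma piH_add (U : STops) (N : comPzSemiRingType) (gam : U -> N) (HU : is_st_semiring U)
  (HN : bipotent N) (Hg : ghost_hom gam) (x y : U) :
  st_add (piH gam x : quotH gam) (piH gam y) = piH gam (st_add x y).
Proof.
case: (HU) => HM HA HD.
set A := gam (st_mul (st_e U) x); set B := gam (st_mul (st_e U) y).
have [AB|nAB] := classic (A = B).
  rewrite add_eq; last by rewrite !(e_q HU Hg); apply/piH_ghost_eq.
  rewrite (e_q HU Hg); symmetry; apply/piH_eq.
  have [l1|n1] := classic (st_lt (st_mul (st_e U) x) (st_mul (st_e U) y)).
    rewrite add_lt' //; apply: HSig => //; first exact: ghost_e.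
  have [l2|n2] := classic (st_lt (st_mul (st_e U) y) (st_mul (st_e U) x)).
    rewrite add_lt2 //; apply: (@Htrans _ _ gam _ (st_mul (st_e U) y)).
      by apply: HSig => //; exact: ghost_e.
    by apply: Hghost; [exact: ghost_e | exact: ghost_e | ].
  by rewrite add_neither //; apply: Hrefl.
case: (HN A B) => h.
  have l : B + A = A by rewrite addrC.
  rewrite add_lt2; first by rewrite (add_lt HM) //; apply: (U_lt HM Hg) => // E; apply: nAB.
  - by rewrite !(e_q HU Hg) quot_lt // => [[a _]]; apply: nAB; rewrite -h.
  - by rewrite !(e_q HU Hg) quot_lt //; split => // E; apply: nAB.
rewrite add_lt'; first by rewrite add_lt' //; apply: (U_lt HM Hg).
by rewrite !(e_q HU Hg) quot_lt.
Qed.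


Ltac qd a := rewrite (piH_surj a); move: (repH a) => {a} a.

Lemma one_q (U : STops) (N : comPzSemiRingType) (gam : U -> N) :
  st_one (quotH gam) = piH gam (st_one U).
Proof. by []. Qed.
Lemma zero_q (U : STops) (N : comPzSemiRingType) (gam : U -> N) :
  st_zero (quotH gam) = piH gam (st_zero U).
Proof. by []. Qed.
Lemma ee_q (U : STops) (N : comPzSemiRingType) (gam : U -> N) :
  st_e (quotH gam) = piH gam (st_e U).
Proof. by []. Qed.
Lemma le_q (U : STops) (N : comPzSemiRingType) (gam : U -> N) x y :
  st_le (piH gam x : quotH gam) (piH gam y) =
  (gam (st_mul (st_e U) x) + gam (st_mul (st_e U) y) = gam (st_mul (st_e U) y)).
Proof. by rewrite /= !g_piH. Qed.

Lemma e0U (U : STops) (HM : is_st_monoid U) : st_mul (st_e U) (st_zero U) = st_zero U.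
Proof. by rewrite (stm_mulC HM) (stm_mul0 HM). Qed.

Lemma piH_gg (U : STops) (N : comPzSemiRingType) (gam : U -> N) x y :
  ghost x -> ghost y -> gam x = gam y -> piH gam x = piH gam y.
Proof. by move=> gx gy E; apply/piH_eq; apply: Hghost. Qed.

Lemma quot_monoid (U : STops) (N : comPzSemiRingType) (gam : U -> N) (HU : is_st_semiring U)
  (HN : bipotent N) (Hg : ghost_hom gam) : is_st_monoid (quotH gam).
Proof.
case: (HU) => HM HA HD.
have Hg' := Hg; case: Hg' => g0 g1 gh.
split.
- move=> a b c; qd a; qd b; qd c.
  by rewrite !(piH_mul HU Hg) (stm_mulA HM).
- by move=> a b; qd a; qd b; rewrite !(piH_mul HU Hg) (stm_mulC HM).
- by move=> a; qd a; rewrite one_q (piH_mul HU Hg) (stm_mul1 HM).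
- by move=> a; qd a; rewrite zero_q (piH_mul HU Hg) (stm_mul0 HM).
- by rewrite ee_q (piH_mul HU Hg) (stm_ee HM).
- move=> a; qd a; rewrite ee_q zero_q (piH_mul HU Hg) => /piH_eq [E _].
  move: E; rewrite (stm_mulA HM) (stm_ee HM) (e0U HM) g0 => E.
  apply/piH_eq; split; first by rewrite (e0U HM) g0.
  by right; right.
- by move=> a _; qd a; rewrite le_q; case: (HN (gam (st_mul (st_e U) a)) (gam (st_mul (st_e U) a))) => ->.
- move=> a b; qd a; qd b; rewrite /ghost ee_q !(piH_mul HU Hg) => ga gb.
  rewrite !le_q => l1 l2; rewrite -ga -gb; apply: piH_gg; try exact: ghost_e.
  by rewrite -l1 addrC l2.
- move=> a b c; qd a; qd b; qd c => _ _ _; rewrite !le_q => l1 l2.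
  by rewrite -l2 addrA l1.
- move=> a b; qd a; qd b => _ _; rewrite !le_q.
  case: (HN (gam (st_mul (st_e U) a)) (gam (st_mul (st_e U) b))) => h; last by left.
  by right; rewrite addrC.
- move=> a b c; qd a; qd b; qd c => _ _ _; rewrite !(piH_mul HU Hg) !le_q !(gam_emul HM Hg).
  by rewrite -mulrDl => ->.
- by move=> a; qd a => _; rewrite zero_q le_q (e0U HM) g0 add0r.
Qed.

Lemma quot_semiring (U : STops) (N : comPzSemiRingType) (gam : U -> N) (HU : is_st_semiring U)
  (HN : bipotent N) (Hg : ghost_hom gam) : is_st_semiring (quotH gam).
Proof.
case: (HU) => HM HA HD.
split; first exact: quot_monoid.
- by move=> a b c; qd a; qd b; qd c; rewrite !(piH_add HU HN Hg) HA.
- by move=> a b c; qd a; qd b; qd c; rewrite !(piH_add HU HN Hg, piH_mul HU Hg) HD.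
Qed.

Lemma iotaE (U : STops) (N : comPzSemiRingType) (gam : U -> N) (Hs : ghost_surj gam) n :
  exists x, [/\ ghost x, gam x = n & iotaH gam n = piH gam x].
Proof.
rewrite /iotaH.
have [g e] := epsilon_spec (inhabits (st_zero U)) (fun x => ghost x /\ gam x = n) (Hs n).
by eexists; split; eauto.
Qed.




Lemma iota_ident (U : STops) (N : comPzSemiRingType) (gam : U -> N) (HU : is_st_semiring U)
  (HN : bipotent N) (Hg : ghost_hom gam) (Hs : ghost_surj gam) : ghost_ident (iotaH gam).
Proof.
case: (HU) => HM HA HD.
have Hg' := Hg; case: Hg' => g0 g1 gh.
split.
- move=> n; have [x [gx _ ->]] := iotaE Hs n.
  by rewrite /ghost ee_q (piH_mul HU Hg) gx.
- move=> y; qd y; rewrite /ghost ee_q (piH_mul HU Hg) => gy.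
  exists (gam (st_mul (st_e U) y)).
  have [x [gx gxE ->]] := iotaE Hs (gam (st_mul (st_e U) y)).
  by rewrite -gy; apply: piH_gg => //; exact: ghost_e.
- move=> a b; have [x [gx <- ->]] := iotaE Hs a; have [y [gy <- ->]] := iotaE Hs b.
  by move/piH_eq => [] ; rewrite gx gy.
- split.
    have [x [gx gxE ->]] := iotaE Hs 0; rewrite zero_q; apply: piH_gg => //.
      by rewrite /ghost (e0U HM).
    by rewrite g0.
  have [x [gx gxE ->]] := iotaE Hs 1; rewrite ee_q; apply: piH_gg => //.
    by rewrite /ghost (stm_ee HM).
  by rewrite g1.
- move=> a b; have [x [gx <- ->]] := iotaE Hs a; have [y [gy <- ->]] := iotaE Hs b.
  have [gxy _] := gh x y gx gy.
  split.
    have [z [gz gzE ->]] := iotaE Hs (gam x * gam y).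
    rewrite (piH_mul HU Hg); apply: piH_gg => //; first exact: ghost_mul.
    by rewrite gzE gxy.
  have [z [gz gzE ->]] := iotaE Hs (gam x + gam y).
  rewrite (piH_add HU HN Hg); apply: piH_gg => //; first exact: ghost_add.
  by rewrite gzE; case: (gh x y gx gy).
Qed.

Lemma beta_val (U W : STops) (N : comPzSemiRingType) (gam : U -> N) (HU : is_st_semiring U)
  (Hg : ghost_hom gam) (iW : N -> W) (HW : is_st_semiring W) (HiW : ghost_ident iW)
  (beta : U -> W) (Hb : st_semiring_hom beta) (Hc : covers gam iW beta) (x : U) :
  (ghost x \/ Sigma0 gam x) \/ gam (st_mul (st_e U) x) = 0 ->
  beta x = iW (gam (st_mul (st_e U) x)).
Proof.
case: (HU) => HM HA HD; case: (HW) => HMW _ _.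
case: Hb => b0 b1 bm ba; case: HiW => _ _ _ [i0 i1] _.
have Hg' := Hg; case: Hg' => g0 g1 gh.
have be : beta (st_e U) = st_e W by rewrite Hc ?g1 // /ghost (stm_ee HM).
have bex : beta (st_mul (st_e U) x) = st_mul (st_e W) (beta x) by rewrite bm be.
have bex' : beta (st_mul (st_e U) x) = iW (gam (st_mul (st_e U) x)) by rewrite Hc //; exact: ghost_e.
case=> [[gx|[ngx [x1 [gx1 l1 E1 nz]]]]|z].
- by rewrite -bex' gx.
- have hx : st_add x x1 = x by apply: (add_lt HM); rewrite gx1.
  have : beta x = st_add (beta x) (beta x1) by rewrite -ba hx.
  rewrite (Hc x1) // E1 -bex' bex (add_ee HMW) => h.
  by [].
- rewrite z i0; apply: (stm_e0 HMW); rewrite -bex bex' z i0 //.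
Qed.

Lemma beta_H (U W : STops) (N : comPzSemiRingType) (gam : U -> N) (HU : is_st_semiring U)
  (Hg : ghost_hom gam) (iW : N -> W) (HW : is_st_semiring W) (HiW : ghost_ident iW)
  (beta : U -> W) (Hb : st_semiring_hom beta) (Hc : covers gam iW beta) (x y : U) :
  Hrel gam x y -> beta x = beta y.
Proof.
move=> [E [->|[[a b]|z]]] //.
  by rewrite !(beta_val HU Hg HW HiW Hb Hc) ?E //; left.
by rewrite !(beta_val HU Hg HW HiW Hb Hc) ?E //; right; rewrite -E.
Qed.




Theorem theorem5p13 (U : STops) (N : comPzSemiRingType) (gam : U -> N) :
  is_st_semiring U -> bipotent N -> ghost_hom gam -> ghost_surj gam ->
  [/\ is_st_semiring (quotH gam),
      ghost_ident (iotaH gam),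
      st_semiring_hom (piH gam : U -> quotH gam),
      covers gam (iotaH gam) (piH gam) &
      forall (W : STops) (iW : N -> W), is_st_semiring W -> ghost_ident iW ->
      forall beta : U -> W, st_semiring_hom beta -> covers gam iW beta ->
        (exists eta : quotH gam -> W,
            [/\ st_semiring_hom eta,
                (forall n : N, eta (iotaH gam n) = iW n) &
                (forall x : U, beta x = eta (piH gam x))]) /\
        (forall eta1 eta2 : quotH gam -> W,
            st_semiring_hom eta1 -> (forall n, eta1 (iotaH gam n) = iW n) ->
            (forall x, beta x = eta1 (piH gam x)) ->
            st_semiring_hom eta2 -> (forall n, eta2 (iotaH gam n) = iW n) ->
            (forall x, beta x = eta2 (piH gam x)) ->
            forall q, eta1 q = eta2 q)].
Proof.
move=> HU HN Hg Hs.
split.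
- exact: quot_semiring.
- exact: iota_ident.
- split => //.
    by move=> x y; rewrite (piH_mul HU Hg).
  by move=> x y; rewrite (piH_add HU HN Hg).
- move=> x gx; have [y [gy gyE ->]] := iotaE Hs (gam x).
  by apply: piH_gg.
move=> W iW HW HiW beta Hb Hc; split.
  have etaE x : beta (repH (piH gam x)) = beta x.
    by apply: (beta_H HU Hg HW HiW Hb Hc); apply: rep_piH.
  exists (fun q => beta (repH q)); split.
  - have Hb' := Hb; case: Hb' => b0 b1 bm ba.
    split.
    + by rewrite zero_q etaE.
    + by rewrite one_q etaE.
    + by move=> a b; qd a; qd b; rewrite (piH_mul HU Hg) !etaE.
    + by move=> a b; qd a; qd b; rewrite (piH_add HU HN Hg) !etaE.
  - move=> n; have [x [gx <- ->]] := iotaE Hs n.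
    by rewrite etaE Hc.
  - by move=> x; rewrite etaE.
move=> e1 e2 _ _ h1 _ _ h2 q; qd q.
by rewrite -h1 -h2.
Qed.
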